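(* (a) For every integer $n\ge 2$, $\mathrm{spt}2_d(n)=2p_d(n-1)-p_d(n)$. (b) For every integer $n\ge 4$, $\mathrm{spt}3_d(n)=2p_d(n-3)-2p_d(n-1)+p_d(n)$.
   Context: $\mathrm{spt}k_d(n)$ is the number of partitions of $n$ in which the smallest part occurs exactly $k$ times and all remaining parts (those larger than the smallest part) are pairwise distinct. $p_d(n)$ is the number of partitions of $n$ into distinct parts, with $p_d(0)=1$. *)

(* Defs.v *)
From mathcomp Require Import all_boot.
Set Implicit Arguments. Unset Strict Implicit. Unset Printing Implicit Defensive.

(* A partition of n is encoded by its multiplicity function
   m : 'I_(n+1) -> 'I_(n+1), where m i = number of parts equal to i.
   Since every part and every multiplicity is <= n, this encoding is a
   bijection with the (unordered) integer partitions of n. *)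
Definition mult_fun (n : nat) := {ffun 'I_n.+1 -> 'I_n.+1}.

Definition is_partition (n : nat) (m : mult_fun n) : bool :=
  (m ord0 == 0 :> nat) && (\sum_(i < n.+1) i * m i == n).

Definition distinct_parts (n : nat) (m : mult_fun n) : bool :=
  [forall i, m i <= 1].

Definition pd (n : nat) : nat :=
  #|[set m : mult_fun n | is_partition m && distinct_parts m]|.

Definition smallest_part (n : nat) (m : mult_fun n) (s : 'I_n.+1) : bool :=
  (0 < m s) && [forall j : 'I_n.+1, (0 < j < s) ==> (m j == 0 :> nat)].

Definition sptkd_prop (k n : nat) (m : mult_fun n) : bool :=
  is_partition m &&
  [exists s : 'I_n.+1, smallest_part m s && (m s == k :> nat) &&
     [forall j : 'I_n.+1, (s < j) ==> (m j <= 1)]].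

Definition sptkd (k n : nat) : nat := #|[set m : mult_fun n | sptkd_prop k m]|.

(* Main.v *)
Require Import Defs.
From mathcomp Require Import all_boot all_algebra.
Import GRing.Theory.
Local Open Scope ring_scope.

Lemma count_coef n (F : 'I_n.+1 -> 'I_n.+1 -> bool) :
  (#|[set m : mult_fun n | [forall i, F i (m i)] && (\sum_(i < n.+1) i * m i == n)%N]|)%:Z
  = (\prod_(i < n.+1) \sum_(j < n.+1) (F i j)%:R *: 'X^(i*j) : {poly int})`_n.
Proof.
rewrite bigA_distr_bigA coef_sum -sum1dep_card -natz natr_sum /=.
rewrite [RHS](bigID (fun f : mult_fun n => [forall i, F i (f i)])) /=.
rewrite [X in _ = _ + X]big1 ?addr0; last first.
  move=> f /forallPn [i Hi].
  by rewrite (bigD1 i) //= (negbTE Hi) scale0r mul0r coef0.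
rewrite [RHS]big_mkcond [LHS]big_mkcond; apply: eq_bigr => f _.
case: (boolP [forall i, F i (f i)]) => Hf /=; last by [].
have -> : \prod_(i < n.+1) ((F i (f i))%:R *: 'X^(i * f i))
   = 'X^(\sum_(i < n.+1) i * f i)%N :> {poly int}.
  rewrite (big_morph (fun k => 'X^k : {poly int}) (@exprD _ _) (expr0 _)).
  by apply: eq_bigr => i _; rewrite (forallP Hf) scale1r.
by rewrite coefXn eq_sym; case: eqP.
Qed.

Lemma fac1 n (P : nat -> bool) (Q : nat -> {poly int}) k : (k < n.+1)%N ->
  (forall j, j != k -> ~~ P j) ->
  \sum_(j < n.+1) (P j)%:R *: Q j = (P k)%:R *: Q k.
Proof.
move=> kn HP; rewrite (bigD1 (Ordinal kn)) //= big1 ?addr0 // => j /eqP Hj.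
have : (j : nat) != k by apply/eqP => E; apply: Hj; apply: val_inj.
by move/HP/negbTE => ->; rewrite scale0r.
Qed.

Lemma fac2 n (P : nat -> bool) (i : nat) : (0 < n)%N ->
  (forall j, (1 < j)%N -> ~~ P j) ->
  \sum_(j < n.+1) (P j)%:R *: 'X^(i*j) = (P 0)%:R *: 1 + (P 1)%:R *: 'X^i :> {poly int}.
Proof.
case: n => [//|n] _ HP; rewrite big_ord_recl /= muln0 expr0; congr (_ + _).
rewrite (@fac1 _ (fun j => P j.+1) (fun j => 'X^(i * j.+1)) 0) //=.
  by rewrite muln1.
by case=> [//|j] _; apply: HP.
Qed.

Definition Pr (N s : nat) : {poly int} := \prod_(s.+1 <= i < N.+1) (1 + 'X^i).

Lemma pd_coef n : (0 < n)%N -> (pd n)%:Z = (Pr n 0)`_n.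
Proof.
move=> n0; rewrite /pd.
have -> : [set m : mult_fun n | is_partition m && distinct_parts m] =
  [set m : mult_fun n | [forall i, (fun (i j : 'I_n.+1) =>
       ((j <= 1)%N && ((i == 0 :> nat) ==> (j == 0 :> nat)))) i (m i)]
     && (\sum_(i < n.+1) i * m i == n)%N].
  apply/setP => m; rewrite !inE /is_partition /distinct_parts.
  apply/idP/idP.
    case/andP => /andP [H0 ->] /forallP H; rewrite andbT; apply/forallP => i.
    rewrite H /=; apply/implyP => /eqP i0.
    by have -> : i = ord0 by apply: val_inj.
  case/andP => /forallP H ->; rewrite andbT; apply/andP; split.
    by have /andP [_ /implyP] := H ord0; apply.
  by apply/forallP => i; case/andP: (H i).
rewrite (@count_coef n (fun i j : 'I_n.+1 => ((j <= 1)%N && ((i == 0 :> nat) ==> (j == 0 :> nat))))) /Pr big_geq_mkord big_mkcond /=.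
apply: (congr1 (fun p : {poly int} => p`_n)); rewrite [RHS]big_mkcond; apply: eq_bigr => i _.
case: i => [[|i] Hi] /=.
  rewrite (@fac1 _ (fun j => (j <= 1)%N && (j == 0)) (fun j => 'X^(0 * j)) 0) //=.
    by rewrite scale1r.
  by move=> j /negbTE ->; rewrite andbF.
rewrite (@fac2 _ (fun j => (j <= 1)%N && true) i.+1) //=.
  by rewrite !scale1r.
by move=> j; rewrite ltnNge andbT => /negbTE ->.
Qed.

Definition Fs (k : nat) n (s : 'I_n.+1) (i j : 'I_n.+1) : bool :=
  if (i : nat) == s then (0 < i)%N && (j == k :> nat)
  else if (i < s)%N then (j == 0 :> nat) else (j <= 1)%N.
Arguments Fs k {n} s i j.

Lemma spt_term k n (s : 'I_n.+1) : (0 < k)%N -> (k <= n)%N ->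
  (#|[set m : mult_fun n | is_partition m && [&& smallest_part m s, (m s == k :> nat) &
     [forall j : 'I_n.+1, (s < j)%N ==> (m j <= 1)%N]]]|)%:Z
  = if (0 < s)%N then ('X^(s*k) * Pr n s)`_n else 0.
Proof.
move=> k0 kn.
have -> : [set m : mult_fun n | is_partition m && [&& smallest_part m s, (m s == k :> nat) &
     [forall j : 'I_n.+1, (s < j)%N ==> (m j <= 1)%N]]] =
  [set m : mult_fun n | [forall i, Fs k s i (m i)]
     && (\sum_(i < n.+1) i * m i == n)%N].
  apply/setP => m; rewrite !inE /is_partition /smallest_part /Fs.
  apply/idP/idP.
    case/andP => /andP [/eqP H0 ->] /and3P [/andP [Hs /forallP Hlt] /eqP Hk /forallP Hgt].
    rewrite andbT; apply/forallP => i.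
    case: eqP => [Eis|Nis].
      have Ei : i = s by apply: val_inj.
      rewrite Ei Hk eqxx andbT lt0n; apply/eqP => s0.
      have E0 : s = ord0 by apply: val_inj.
      by move: Hs; rewrite E0 H0.
    case: ltnP => [ilt|ige].
      case: (posnP i) => [i0|ip].
        have E0 : i = ord0 by apply: val_inj.
        by rewrite E0 H0.
      by have /implyP := Hlt i; apply; rewrite ip ilt.
    have /implyP := Hgt i; apply; rewrite ltn_neqAle ige andbT.
    by apply/eqP => E; apply: Nis.
  case/andP => /forallP H ->; rewrite andbT.
  have := H s; rewrite eqxx => /andP [sp /eqP Hk].
  apply/andP; split.
    have := H ord0; rewrite /= eq_sym (negbTE (lt0n_neq0 sp)) sp.
    done.
  apply/and3P; split.
  - rewrite Hk k0 /=; apply/forallP => j; apply/implyP => /andP [jp js].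
    by have := H j; rewrite (ltn_eqF js) js.
  - by rewrite Hk.
  - apply/forallP => j; apply/implyP => sj.
    have := H j; rewrite eq_sym (ltn_eqF sj).
    by rewrite ltnNge (ltnW sj).
rewrite (@count_coef n (Fs k s)).
have -> : \prod_(i < n.+1) \sum_(j < n.+1) (Fs k s i j)%:R *: 'X^(i * j)
   = \prod_(i < n.+1) (if (i : nat) == s then ((0 < s)%N)%:R *: 'X^(s*k)
        else if (i < s)%N then 1 else 1 + 'X^i) :> {poly int}.
  apply: eq_bigr => i _; rewrite /Fs.
  case: eqP => [Eis|Nis].
    rewrite (@fac1 _ (fun j => (0 < i)%N && (j == k)) (fun j => 'X^(i * j)) k) //=.
      by rewrite eqxx andbT Eis.
    by move=> j /negbTE ->; rewrite andbF.
  case: ltnP => [ilt|ige].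
    rewrite (@fac1 _ (fun j => (j == 0)) (fun j => 'X^(i * j)) 0) //=.
      by rewrite muln0 expr0 scale1r.
  have ip : (0 < i)%N.
    by rewrite lt0n; apply/eqP => i0; apply: Nis; apply/eqP; rewrite eqn_leq ige i0.
  rewrite (@fac2 _ (fun j => (j <= 1)%N) i) //=.
  - by rewrite !scale1r.
  - by rewrite -ltnS; apply: leq_trans (ltn_ord i).
  - by move=> j; rewrite ltnNge => /negbTE ->.
case: (posnP s) => [s0|sp].
  rewrite (bigD1 s) //= eqxx s0 /= scale0r mul0r coef0 //.
rewrite (bigD1 s) //= eqxx scale1r.
apply: (congr1 (fun p => ('X^(s*k) * p)`_n)).
rewrite /Pr big_geq_mkord [RHS]big_mkcond [LHS]big_mkcond; apply: eq_bigr => i _ /=.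
case: (eqVneq i s) => [->|Nis]; first by rewrite eqxx ltnn.
have Nis' : (i : nat) != s by [].
rewrite /= (negbTE Nis').
case: ltnP => [ilt|ige]; first by rewrite ltnNge (ltnW ilt).
have : (s < i)%N by rewrite ltn_neqAle eq_sym Nis' ige.
by move=> ->.
Qed.

Lemma sp_uniq n (m : mult_fun n) s s' : (m ord0 == 0 :> nat) ->
  smallest_part m s -> smallest_part m s' -> s = s'.
Proof.
move=> /eqP H0.
have aux : forall a b : 'I_n.+1, smallest_part m a -> smallest_part m b -> ~ (a < b)%N.
  move=> a b /andP [Ha _] /andP [_ /forallP Hb] ab.
  have ap : (0 < a)%N.
    rewrite lt0n; apply/eqP => a0.
    have E : a = ord0 by apply: val_inj.
    by move: Ha; rewrite E H0.
  have /implyP := Hb a; rewrite ap ab => /(_ isT) /eqP E.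
  by move: Ha; rewrite E.
move=> Hs Hs'; apply: val_inj; case: (ltngtP s s') => // [lt|gt].
  by case: (aux _ _ Hs Hs' lt).
by case: (aux _ _ Hs' Hs gt).
Qed.

Lemma spt_coef k n : (0 < k)%N -> (k <= n)%N ->
  (sptkd k n)%:Z = \sum_(0 <= t < n) ('X^(t.+1*k) * Pr n t.+1)`_n.
Proof.
move=> k0 kn.
pose A (s : 'I_n.+1) (m : mult_fun n) := is_partition m && [&& smallest_part m s, (m s == k :> nat) &
     [forall j : 'I_n.+1, (s < j)%N ==> (m j <= 1)%N]].
have E : sptkd k n = (\sum_(s < n.+1) #|[set m | A s m]|)%N.
  rewrite /sptkd -sum1dep_card.
  under [in RHS]eq_bigr => s _ do rewrite -sum1dep_card big_mkcond.
  rewrite exchange_big big_mkcond /=; apply: eq_bigr => m _.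
  case: (boolP (sptkd_prop k m)) => Hm.
    case/andP: (Hm) => Hp /existsP [s0 /andP [/andP [Hs0 Hk0] Hg0]].
    rewrite (bigD1 s0) //= {1}/A Hp Hs0 Hk0 Hg0 /= big1 // => s Ns.
    case: ifP => // /andP [_ /andP [Hs _]].
    case/andP: Hp => H0 _.
    by move: Ns; rewrite (@sp_uniq _ _ _ _ H0 Hs Hs0) eqxx.
  rewrite big1 // => s _; case: ifP => // /andP [Hp /and3P [a b c]].
  by case/negP: Hm; rewrite /sptkd_prop Hp /=; apply/existsP; exists s; rewrite a b c.
rewrite E -natz natr_sum.
under eq_bigr => s _ do rewrite natz (@spt_term k n s k0 kn).
rewrite big_ord_recl /= add0r -(big_mkord xpredT (fun t => ('X^(t.+1*k) * Pr n t.+1)`_n)).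
done.
Qed.

From mathcomp Require Import ring zify.

Lemma Pr_rec N t : (t < N)%N -> Pr N t = (1 + 'X^(t.+1)) * Pr N t.+1.
Proof. by move=> tN; rewrite /Pr big_ltn // ltnS. Qed.

Lemma Pr_top N : Pr N N = 1.
Proof. by rewrite /Pr big_geq. Qed.

Definition U N k : {poly int} := \sum_(0 <= t < N) 'X^(t.+1*k) * Pr N t.+1.

Lemma U_rec N k : U N k.+1 = 'X^k * (Pr N 0 + U N k - 'X^(N*k)) - U N k.
Proof.
have W : \sum_(0 <= t < N) 'X^(t*k) * Pr N t = Pr N 0 + U N k - 'X^(N*k).
  have V1 : \sum_(0 <= t < N.+1) 'X^(t*k) * Pr N t
     = 'X^(0*k) * Pr N 0 + \sum_(0 <= t < N) 'X^(t.+1*k) * Pr N t.+1.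
    by rewrite big_nat_recl.
  have V2 : \sum_(0 <= t < N.+1) 'X^(t*k) * Pr N t
     = \sum_(0 <= t < N) 'X^(t*k) * Pr N t + 'X^(N*k) * Pr N N.
    by rewrite big_nat_recr.
  rewrite V1 Pr_top mulr1 in V2.
  have -> : Pr N 0 = 'X^(0*k) * Pr N 0 by rewrite mul0n expr0 mul1r.
  by rewrite /U V2 addrK.
rewrite /U.
rewrite (@eq_big_nat _ _ _ 0 N _ (fun t => 'X^k * ('X^(t*k) * Pr N t) - 'X^(t.+1*k) * Pr N t.+1)); last first.
  move=> t /andP [_ tN]; rewrite (@Pr_rec N t tN) mulnS mulSn !exprD; ring.
by rewrite sumrB -mulr_sumr W.
Qed.

Lemma Pr_stab j d : (Pr (j + d) 0)`_j = (Pr j 0)`_j.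
Proof.
elim: d => [|d IH]; first by rewrite addn0.
rewrite addnS /Pr big_nat_recr //= mulrDr mulr1 coefD coefMXn ltnS leq_addr addr0.
exact: IH.
Qed.

Lemma U1 N : U N 1 = Pr N 0 - 1.
Proof. rewrite U_rec expr0 mul1r muln0 expr0; ring. Qed.

Lemma partA n : (2 <= n)%N -> (sptkd 2 n)%:Z = 2 * (pd n.-1)%:Z - (pd n)%:Z.
Proof.
case: n => [|[|n]] // _.
rewrite (@spt_coef 2 n.+2) // -coef_sum -/(U _ _) U_rec U1 muln1.
rewrite (@pd_coef n.+2) // (@pd_coef n.+1) // -(Pr_stab n.+1 1) addn1.
rewrite coefB coefXnM /= !coefB !coefD coef1 coefXn /=.
rewrite subn1 /= coefN coef1 /= (ltn_eqF (ltnSn _)) subr0; ring.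
Qed.


Lemma partB n : (4 <= n)%N ->
  (sptkd 3 n)%:Z = 2 * (pd (n - 3))%:Z - 2 * (pd n.-1)%:Z + (pd n)%:Z.
Proof.
case: n => [|[|[|[|n]]]] // _.
rewrite (@spt_coef 3 n.+4) // -coef_sum -/(U _ _) U_rec U_rec U1 muln1.
rewrite (@pd_coef n.+4) // (@pd_coef n.+3) // (@pd_coef n.+1) //.
rewrite -(Pr_stab n.+1 3) -(Pr_stab n.+3 1) !addnS !addn0 /=.
rewrite !(coefB, coefD, coefXnM, coefN, coef1, coefXn) /=.
rewrite !subSS !subn0.
have -> : (n.+1 == n.+4) = false by apply/negbTE/eqP; lia.
have -> : (n.+2 == n.+4 * 2)%N = false by apply/negbTE/eqP; lia.
have -> : (n.+3 == n.+4) = false by apply/negbTE/eqP; lia.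
rewrite !subr0; ring.
Qed.

Theorem corollary5 :
  (forall n : nat, (2 <= n)%N ->
     (sptkd 2 n)%:Z = 2 * (pd n.-1)%:Z - (pd n)%:Z)
  /\
  (forall n : nat, (4 <= n)%N ->
     (sptkd 3 n)%:Z = 2 * (pd (n - 3))%:Z - 2 * (pd n.-1)%:Z + (pd n)%:Z).
Proof. split; [exact: partA | exact: partB]. Qed.
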